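(* Let $C$ be a closed cone with nonempty interior in a real Banach space and let $f:\operatorname{int} C \to \operatorname{int} C$ be subhomogeneous and type K order-preserving. For $\epsilon > 0$ let $f_\epsilon := f - \epsilon\, \mathrm{id}$. Then for any $x, y \in \operatorname{int} C$ there exists $\epsilon > 0$ small enough that $f_\epsilon(x), f_\epsilon(y) \in \operatorname{int} C$ and $$d_T(f_\epsilon(x), f_\epsilon(y)) \le d_T(x,y).$$
   Context: A closed cone is a closed convex set $C \subset X$ with $\lambda C \subset C$ for all $\lambda \ge 0$ and $C \cap (-C) = \{0\}$; $x \le y$ means $y - x \in C$. A map $f$ is subhomogeneous if $f(tx) \le t f(x)$ for all $t \ge 1$; it is type K order-preserving if for any $x \le y$ in its domain there exists $\epsilon > 0$ with $f(y) - f(x) \ge \epsilon (y - x)$. For $x, y \in C$, $M(x/y) := \inf\{\beta > 0 : x \le \beta y\}$. For $x,y\in\operatorname{int} C$, Thompson's metric is $d_T(x,y) := \max\{\log M(x/y), \log M(y/x)\}$. *)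

(* Defs.v *)
From HB Require Import structures.
From mathcomp Require Import all_boot all_order all_algebra.
From mathcomp Require Import all_classical all_reals all_analysis.
Set Implicit Arguments. Unset Strict Implicit. Unset Printing Implicit Defensive.
Import Order.TTheory GRing.Theory Num.Theory.
Import numFieldNormedType.Exports.
Local Open Scope classical_set_scope.
Local Open Scope ring_scope.

Section ConeDefs.
Variables (R : realType) (V : completeNormedModType R).

Definition closed_cone (C : set V) : Prop :=
  [/\ closed C,
      (forall x y (t : R), C x -> C y -> 0 <= t -> t <= 1 -> C (t *: x + (1 - t) *: y)),
      (forall x (l : R), C x -> 0 <= l -> C (l *: x)) &
      (forall x, C x -> C (- x) -> x = 0)].

Definition cone_le (C : set V) (x y : V) : Prop := C (y - x).

Definition Mxy (C : set V) (x y : V) : R :=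
  inf [set beta : R | 0 < beta /\ cone_le C x (beta *: y)].

Definition thompson (C : set V) (x y : V) : R :=
  Num.max (ln (Mxy C x y)) (ln (Mxy C y x)).

Definition subhomogeneous (C D : set V) (f : V -> V) : Prop :=
  forall x (t : R), D x -> D (t *: x) -> 1 <= t -> cone_le C (f (t *: x)) (t *: f x).

Definition typeK_order_preserving (C D : set V) (f : V -> V) : Prop :=
  forall x y, D x -> D y -> cone_le C x y ->
    exists eps : R, 0 < eps /\ cone_le C (eps *: (y - x)) (f y - f x).

End ConeDefs.

(* Main.v *)
Require Import Defs.
From mathcomp Require Import all_boot all_order all_algebra.
From mathcomp Require Import all_classical all_reals all_analysis.
From mathcomp Require Import lra.
Import Order.TTheory GRing.Theory Num.Theory.
Import numFieldNormedType.Exports.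
Local Open Scope classical_set_scope.
Local Open Scope ring_scope.

Section Aux.
Variables (R : realType) (V : completeNormedModType R) (C : set V).
Hypothesis hC : closed_cone C.

Lemma cscale a (l : R) : C a -> 0 <= l -> C (l *: a).
Proof. by case: hC => _ _ h _; apply: h. Qed.

Lemma cadd a b : C a -> C b -> C (a + b).
Proof.
case: hC => _ hconv hsc _ Ha Hb.
have h2 : (0:R) <= 2^-1 by rewrite invr_ge0.
have h2' : (2^-1:R) <= 1 by rewrite invf_le1 // ler1n.
have := hsc _ 2 (hconv a b 2^-1 Ha Hb h2 h2') (ler0n _ 2).
have -> : (1 - 2^-1 : R) = 2^-1 by rewrite {1}(splitr 1) mul1r addrK.
by rewrite scalerDr !scalerA divff ?pnatr_eq0 // !scale1r.
Qed.

Lemma intP z : interior C z <-> exists2 r : R, 0 < r & forall w, `|z - w| < r -> C w.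
Proof.
rewrite /interior /=; split.
  move=> /nbhs_ballP [r r0 hr]; exists r => // w hw; apply: hr.
  by rewrite -ball_normE.
move=> [r r0 hr]; apply/nbhs_ballP; exists r => // w; rewrite -ball_normE; exact: hr.
Qed.

Lemma small_t (r : R) (v : V) : 0 < r ->
  0 < r / (2 * (`|v| + 1)) /\ r / (2 * (`|v| + 1)) * `|v| < r.
Proof.
move=> r0; have n0 : 0 <= `|v| := normr_ge0 v.
have d0 : 0 < 2 * (`|v| + 1) by lra.
split; first by rewrite divr_gt0.
rewrite mulrAC ltr_pdivrMr //; nra.
Qed.


Lemma int_scale y (l : R) : interior C y -> 0 < l -> interior C (l *: y).
Proof.
move=> /intP [r r0 hr] l0; apply/intP; exists (l * r); first exact: mulr_gt0.
move=> w hw.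
have -> : w = l *: (l^-1 *: w) by rewrite scalerA divff ?gt_eqF // scale1r.
apply: cscale; last exact: ltW.
apply: hr.
have -> : y - l^-1 *: w = l^-1 *: (l *: y - w).
  by rewrite scalerBr scalerA mulVf ?gt_eqF // scale1r.
rewrite normrZ gtr0_norm ?invr_gt0 // mulrC ltr_pdivrMr //.
by rewrite mulrC.
Qed.

Lemma int_shift z x : interior C z ->
  exists2 e : R, 0 < e & forall eps, 0 < eps -> eps <= e -> interior C (z - eps *: x).
Proof.
move=> /intP [r r0 hr].
have [t0 ht] := small_t r x r0.
set t := r / (2 * (`|x| + 1)) in t0 ht.
have hr2 : 0 < r / 2 by rewrite divr_gt0.
have ht2 : t * `|x| <= r / 2.
  rewrite /t mulrAC ler_pdivrMr; last by have := normr_ge0 x; lra.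
  have := normr_ge0 x; nra.
exists t => // eps e0 et; apply/intP; exists (r / 2) => // w hw.
apply: hr.
have -> : z - w = (z - eps *: x - w) + eps *: x.
  by rewrite addrAC subrK.
apply: (le_lt_trans (ler_normD _ _)).
rewrite normrZ gtr0_norm //.
have : eps * `|x| <= t * `|x| by apply: ler_wpM2r.
lra.
Qed.

Lemma degenerate : interior C 0 -> forall v : V, v = 0.
Proof.
move=> /intP [r r0 hr] v.
have [t0 ht] := small_t r v r0.
set t := r / (2 * (`|v| + 1)) in t0 ht.
case: hC => _ _ _ hp.
have h1 : C (t *: v) by apply: hr; rewrite sub0r normrN normrZ gtr0_norm.
have h2 : C (- (t *: v)) by apply: hr; rewrite sub0r opprK normrZ gtr0_norm.
have := hp _ h1 h2; move/eqP; rewrite scaler_eq0 (gt_eqF t0) /=; by move/eqP.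
Qed.


Lemma Mle a b (beta : R) : 0 < beta -> C (beta *: b - a) -> Mxy C a b <= beta.
Proof.
move=> b0 hb; rewrite /Mxy; apply: ge_inf => //.
by exists 0 => y [/ltW].
Qed.

Lemma Mge0 a b (beta : R) : 0 < beta -> C (beta *: b - a) -> 0 <= Mxy C a b.
Proof.
move=> b0 hb; rewrite /Mxy; apply: lb_le_inf; first by exists beta.
by move=> y [/ltW].
Qed.

Lemma Mne a b : interior C b -> exists2 beta : R, 0 < beta & C (beta *: b - a).
Proof.
move=> /intP [r r0 hr].
have [t0 ht] := small_t r a r0.
set t := r / (2 * (`|a| + 1)) in t0 ht.
exists t^-1; first by rewrite invr_gt0.
have -> : t^-1 *: b - a = t^-1 *: (b - t *: a).
  by rewrite scalerBr scalerA mulVf ?gt_eqF // scale1r.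
apply: cscale; last by rewrite invr_ge0 ltW.
apply: hr; by rewrite opprB addrC subrK normrZ gtr0_norm.
Qed.

Lemma Mattain a b : interior C b -> C (Mxy C a b *: b - a).
Proof.
move=> hb; have [beta b0 hbeta] := Mne a b hb.
set M := Mxy C a b.
case: hC => hcl _ _ _; apply: hcl => B /nbhs_ballP [e e0 he].
have n0 := normr_ge0 b.
set s := e / (`|b| + 1).
have s0 : 0 < s by rewrite divr_gt0 //; lra.
have hs : s * (`|b| + 1) = e by rewrite /s divfK //; lra.
have hne : [set beta : R | 0 < beta /\ cone_le C a (beta *: b)] !=set0.
  by exists beta.
have hl : M < M + s by rewrite ltrDl.
have [g [g0 hg] glt] := inf_lt hne hl.
have Mg : M <= g by apply: Mle.
exists (g *: b - a); split => //; apply: he; rewrite -ball_normE /=.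
have -> : M *: b - a - (g *: b - a) = (M - g) *: b.
  by rewrite opprB addrA subrK scalerBl.
rewrite normrZ ler0_norm ?subr_le0 // opprB.
have : (g - M) * `|b| <= (g - M) * (`|b| + 1) by apply: ler_wpM2l; lra.
have : (g - M) * (`|b| + 1) < s * (`|b| + 1).
  rewrite ltr_pM2r; last lra. rewrite /M /Mxy; lra.
lra.
Qed.


Lemma lnM_le a b (l : R) : 1 <= l -> C (l *: b - a) -> ln (Mxy C a b) <= ln l.
Proof.
move=> l1 hl.
have l0 : 0 < l by lra.
have m0 := Mge0 a b l l0 hl; have ml := Mle a b l l0 hl.
have [mz|mp] := leP (Mxy C a b) 0.
  by rewrite ln0 // ln_ge0.
by rewrite ler_ln // posrE.
Qed.

End Aux.
Arguments cscale {R V C}. Arguments cadd {R V C}. Arguments Mattain {R V C}. Arguments Mne {R V C}. Arguments Mge0 {R V C}. Arguments Mle {R V C}. Arguments int_scale {R V C}. Arguments int_shift {R V C}. Arguments degenerate {R V C}. Arguments lnM_le {R V C}.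

Lemma id1 (R : realType) (V : completeNormedModType R) (l e1 eps : R) (u F w v z : V) :
  (l *: u - F) + ((F - w) - e1 *: (l *: v - z)) + (e1 - eps) *: (l *: v - z)
  = l *: (u - eps *: v) - (w - eps *: z).
Proof.
rewrite addrA subrKA scalerBl subrKA !scalerBr !scalerA (mulrC eps l) !opprB -!addrA; congr (_ + _).
by rewrite addrA [RHS]addrC (addrC (- w)).
Qed.

Theorem mainTheorem2 (R : realType) (V : completeNormedModType R)
  (C : set V) (f : V -> V) :
  closed_cone C ->
  interior C !=set0 ->
  (forall x, interior C x -> interior C (f x)) ->
  subhomogeneous C (interior C) f ->
  typeK_order_preserving C (interior C) f ->
  forall x y, interior C x -> interior C y ->
    exists eps : R, 0 < eps /\
      [/\ interior C (f x - eps *: x),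
          interior C (f y - eps *: y) &
          thompson C (f x - eps *: x) (f y - eps *: y) <= thompson C x y].
Proof.
move=> hC hne hf hsub hK x y hx hy.
have Cx : C x := interior_subset hx.
have Cy : C y := interior_subset hy.
have A1 : C (Mxy C x y *: y - x) := Mattain hC x y hy.
have A2 : C (Mxy C y x *: x - y) := Mattain hC y x hx.
have [b1 b10 hb1] := Mne hC x y hy.
have [b2 b20 hb2] := Mne hC y x hx.
have M10 := Mge0 x y b1 b10 hb1.
have M20 := Mge0 y x b2 b20 hb2.
set M1 := Mxy C x y in A1 M10 *.
set M2 := Mxy C y x in A2 M20 *.
set l := Num.max M1 M2.
have lM1 : M1 <= l by rewrite /l le_max lexx.
have lM2 : M2 <= l by rewrite /l le_max lexx orbT.
have [l1|l1] := ltP l 1.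
  have m1 : M1 < 1 by apply: le_lt_trans lM1 l1.
  have m2 : M2 < 1 by apply: le_lt_trans lM2 l1.
  have hp : M1 * M2 < 1 by nra.
  have h1 : C ((M1 * M2 - 1) *: x).
    have -> : (M1 * M2 - 1) *: x = M1 *: (M2 *: x - y) + (M1 *: y - x).
      by rewrite scalerBr scalerA addrA subrK scalerBl scale1r.
    refine (cadd hC _ _ _ A1); refine (cscale hC _ _ A2 _); exact: M10.
  have h2 : C (- x).
    have -> : - x = (1 - M1 * M2)^-1 *: ((M1 * M2 - 1) *: x).
      rewrite scalerA.
      have -> : (1 - M1 * M2)^-1 * (M1 * M2 - 1) = -1.
        by rewrite -[M1 * M2 - 1]opprB mulrN mulVf // subr_eq0 gt_eqF.
      by rewrite scaleN1r.
    refine (cscale hC _ _ h1 _); rewrite invr_ge0; lra.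
  case: (hC) => _ _ _ hpt.
  have x0 := hpt _ Cx h2.
  have hx0 : interior C 0 by rewrite -x0.
  have hall := degenerate hC hx0.
  exists 1; split => //.
  have -> : f x - 1 *: x = x by rewrite (hall (f x - _)) (hall x).
  have -> : f y - 1 *: y = y by rewrite (hall (f y - _)) (hall y).
  by split.
have l0 : 0 < l by lra.
have Cxl : C (l *: y - x).
  have -> : l *: y - x = (l - M1) *: y + (M1 *: y - x) by rewrite scalerBl addrA subrK.
  refine (cadd hC _ _ _ A1); refine (cscale hC _ _ Cy _); lra.
have Cyl : C (l *: x - y).
  have -> : l *: x - y = (l - M2) *: x + (M2 *: x - y) by rewrite scalerBl addrA subrK.
  refine (cadd hC _ _ _ A2); refine (cscale hC _ _ Cx _); lra.
have hly := int_scale hC y l hy l0.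
have hlx := int_scale hC x l hx l0.
have [e1 [e10 He1]] := hK x (l *: y) hx hly Cxl.
have [e2 [e20 He2]] := hK y (l *: x) hy hlx Cyl.
have S1 := hsub y l hy hly l1.
have S2 := hsub x l hx hlx l1.
have [e3 e30 He3] := int_shift (f x) x (hf x hx).
have [e4 e40 He4] := int_shift (f y) y (hf y hy).
set eps := Num.min (Num.min e1 e2) (Num.min e3 e4).
have eps0 : 0 < eps by rewrite /eps !lt_min e10 e20 e30 e40.
have ep1 : eps <= e1 by rewrite /eps !ge_min lexx.
have ep2 : eps <= e2 by rewrite /eps !ge_min lexx !orbT.
have ep3 : eps <= e3 by rewrite /eps !ge_min lexx !orbT.
have ep4 : eps <= e4 by rewrite /eps !ge_min lexx !orbT.
have K1 : C (l *: (f y - eps *: y) - (f x - eps *: x)).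
  rewrite -(@id1 _ _ l e1 eps _ (f (l *: y))).
  refine (cadd hC _ _ (cadd hC _ _ S1 He1) _).
  refine (cscale hC _ _ Cxl _); lra.
have K2 : C (l *: (f x - eps *: x) - (f y - eps *: y)).
  rewrite -(@id1 _ _ l e2 eps _ (f (l *: x))).
  refine (cadd hC _ _ (cadd hC _ _ S2 He2) _).
  refine (cscale hC _ _ Cyl _); lra.
exists eps; split => //; split; [exact: He3 | exact: He4 |].
have hl : ln l <= Num.max (ln M1) (ln M2).
  rewrite /l; case: (leP M1 M2) => h; by rewrite le_max lexx ?orbT.
rewrite /thompson ge_max; apply/andP; split; apply: le_trans hl.
  exact: lnM_le _ _ _ l1 K1.
exact: lnM_le _ _ _ l1 K2.
Qed.
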